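(* Let $A$ and $B$ be rings, $f: A\to B$ a ring homomorphism and $J$ a proper ideal of $B$. Then: (1) If $A\bowtie^{f}J$ is a nil-Armendariz ring, then $A$ is a nil-Armendariz ring. (2) If $A$ and $f(A)+J$ are nil-Armendariz rings, then $A\bowtie^{f}J$ is a nil-Armendariz ring.
   Context: All rings are associative with identity (not necessarily commutative), ring homomorphisms are unital, and ideals are two-sided. $\mathrm{nil}(R)$ denotes the set of nilpotent elements of a ring $R$, and $\mathrm{nil}(R)[x]$ the set of polynomials all of whose coefficients lie in $\mathrm{nil}(R)$. For a ring homomorphism $f:A\to B$ and an ideal $J$ of $B$, the amalgamation is the subring $A\bowtie^{f}J=\{(a,f(a)+j)\mid a\in A,\ j\in J\}$ of $A\times B$; $f(A)+J=\{f(a)+j: a\in A, j\in J\}$ is a subring of $B$. A ring $R$ is nil-Armendariz if whenever $p(x)=\sum_{i=0}^n a_ix^i$ and $q(x)=\sum_{j=0}^m b_jx^j$ in $R[x]$ satisfy $p(x)q(x)\in\mathrm{nil}(R)[x]$, then $a_ib_j\in\mathrm{nil}(R)$ for all $i,j$. *)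

(* Defs.v *)
From HB Require Import structures.
From mathcomp Require Import all_boot all_order all_algebra.
Set Implicit Arguments. Unset Strict Implicit. Unset Printing Implicit Defensive.
Import GRing.Theory.
Local Open Scope ring_scope.

Definition nilp (R : nzRingType) (x : R) : Prop := exists n : nat, x ^+ n = 0.

(* Polynomials over the subring S are polynomials of {poly R} whose
   coefficients lie in S; ring operations (hence products and nilpotency)
   in S are those of R. *)
Definition nilArmendariz_on (R : nzRingType) (S : R -> Prop) : Prop :=
  forall p q : {poly R},
    (forall i, S p`_i) -> (forall i, S q`_i) ->
    (forall k, nilp (p * q)`_k) ->
    forall i j, nilp (p`_i * q`_j).

Definition nilArmendariz (R : nzRingType) : Prop :=
  nilArmendariz_on (fun _ : R => True).

Definition proper_two_sided_ideal (B : nzRingType) (J : {pred B}) : Prop :=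
  [/\ 0 \in J, 1 \notin J,
      (forall u v, u \in J -> v \in J -> u + v \in J) /\
      (forall u, u \in J -> - u \in J),
      (forall a u, u \in J -> a * u \in J) &
      (forall a u, u \in J -> u * a \in J)].

Definition amalg (A B : nzRingType) (f : A -> B) (J : {pred B}) (x : A * B) : Prop :=
  exists a : A, exists j : B, j \in J /\ x = (a, f a + j).

Definition fAJ (A B : nzRingType) (f : A -> B) (J : {pred B}) (b : B) : Prop :=
  exists a : A, exists j : B, j \in J /\ b = f a + j.

(* Main.v *)
Require Import Defs.
From HB Require Import structures.
From mathcomp Require Import all_boot all_order all_algebra.
Local Open Scope ring_scope.
Import GRing.Theory.

Lemma exprpair (A B : nzRingType) (x : A) (y : B) (n : nat) :
  (x, y) ^+ n = (x ^+ n, y ^+ n).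
Proof.
elim: n => [|n IH]; first by rewrite !expr0.
by rewrite !exprS IH.
Qed.

Lemma nilpPair (A B : nzRingType) (x : A) (y : B) :
  Defs.nilp x -> Defs.nilp y -> Defs.nilp ((x, y) : A * B).
Proof.
move=> [n Hn] [m Hm]; exists (n + m)%N.
by rewrite exprpair !exprD Hn Hm mul0r mulr0.
Qed.

Lemma nilpMorph (A B : nzRingType) (g : {rmorphism A -> B}) (x : A) :
  Defs.nilp x -> Defs.nilp (g x).
Proof. by move=> [n Hn]; exists n; rewrite -rmorphXn Hn rmorph0. Qed.

Section G.
Variables (A B : nzRingType) (f : {rmorphism A -> B}).
Definition gmap (a : A) : (A * B)%type := (a, f a).
Fact gmap_add : zmod_morphism gmap.
Proof. by move=> x y; rewrite /gmap rmorphB. Qed.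
Fact gmap_mul : monoid_morphism gmap.
Proof. by split; rewrite /gmap ?rmorph1 // => x y; rewrite rmorphM. Qed.
HB.instance Definition _ := GRing.isZmodMorphism.Build A (A * B)%type gmap gmap_add.
HB.instance Definition _ := GRing.isMonoidMorphism.Build A (A * B)%type gmap gmap_mul.
End G.
Arguments gmap {A B} f _.

Theorem theorem3p1 (A B : nzRingType) (f : {rmorphism A -> B}) (J : {pred B}) :
  proper_two_sided_ideal J ->
  (nilArmendariz_on (@amalg A B f J) -> nilArmendariz A) /\
  (nilArmendariz A -> nilArmendariz_on (@fAJ A B f J) ->
     nilArmendariz_on (@amalg A B f J)).
Proof.
move=> [J0 _ _ _ _]; split.
- move=> H p q _ _ Hpq i j.
  have := H (map_poly (gmap f) p) (map_poly (gmap f) q).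
  have Hc : forall r : {poly A}, forall k, amalg f J (map_poly (gmap f) r)`_k.
    by move=> r k; rewrite coef_map; exists r`_k, 0; rewrite addr0.
  move=> /(_ (Hc p) (Hc q)).
  have: forall k, Defs.nilp (map_poly (gmap f) p * map_poly (gmap f) q)`_k.
    by move=> k; rewrite -rmorphM coef_map; apply: nilpMorph.
  move=> H1 /(_ H1 i j); rewrite !coef_map -rmorphM.
  move=> /(@nilpMorph _ _ (@fst A B) _) //.
- move=> HA HB P Q HP HQ HPQ i j.
  have Ef : forall R : {poly A * B}, forall k, (map_poly (@fst A B) R)`_k = (R`_k).1
    by move=> R k; rewrite coef_map.
  have Es : forall R : {poly A * B}, forall k, (map_poly (@snd A B) R)`_k = (R`_k).2
    by move=> R k; rewrite coef_map.
  have H1 := HA (map_poly (@fst A B) P) (map_poly (@fst A B) Q) (fun _ => I) (fun _ => I).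
  have H2 := HB (map_poly (@snd A B) P) (map_poly (@snd A B) Q).
  have : Defs.nilp ((P`_i * Q`_j).1, (P`_i * Q`_j).2).
    apply: nilpPair.
      rewrite /= -!Ef; apply: H1 => k; rewrite -rmorphM Ef.
      exact: (@nilpMorph _ _ (@fst A B) _).
    rewrite /= -!Es; apply: H2.
    - by move=> k; rewrite Es; case: (HP k) => a [b [Hb ->]]; exists a, b.
    - by move=> k; rewrite Es; case: (HQ k) => a [b [Hb ->]]; exists a, b.
    by move=> k; rewrite -rmorphM Es; exact: (@nilpMorph _ _ (@snd A B) _).
  by case: (P`_i * Q`_j).
Qed.
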